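(* Let $S$ be a finite generating subset of a group $G$ with $1\in S$ and $|S|\ge3$. Assume that either $G$ is infinite or $\alpha_2(S)\le\alpha_{-2}(S)$. Let $H$ be a $2$-atom of $S$ with $1\in H$ and $|\Pi^l(H)|=1$. Then $|H|\le|S|-1$.
   Context: For a group $G$ and $S\subseteq G$, $\mathrm{Cay}(G,S)$ is the graph on $G$ with arcs $(x,y)$, $x^{-1}y\in S$; the image of $X$ is $XS$. For a reflexive locally finite graph $\Gamma=(V,E)$, $\partial(X)=\Gamma(X)\setminus X$; $\Gamma$ is $k$-separable if some finite $X$ has $|X|\ge k$ and $|V\setminus\Gamma(X)|\ge k$; then $\kappa_k(\Gamma)=\min\{|\partial(X)|: X\text{ finite},|X|\ge k,|V\setminus\Gamma(X)|\ge k\}$, a $k$-fragment is such an $X$ attaining the minimum, a $k$-atom is a $k$-fragment of minimum cardinality, $\alpha_k(\Gamma)$ its cardinality. If $\Gamma$ is not $k$-separable and $|V|\ge 2k-1$, by convention $\kappa_k(\Gamma)=|V|-2k+1$ and every $k$-subset is a $k$-fragment and $k$-atom. For $S$ with $1\in S$, these notions for $S$ refer to $\mathrm{Cay}(\langle S\rangle,S)$, and $\alpha_{-k}(S)=\alpha_k(\mathrm{Cay}(\langle S\rangle,S^{-1}))$. $\Pi^l(X)=\{x\in G: xX=X\}$. *)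

(* Defs.v *)
From Stdlib Require Import List Arith Lia.
Import ListNotations.

Set Implicit Arguments.

Record is_group (T : Type) (mul : T -> T -> T) (inv : T -> T) (e : T) : Prop := {
  grp_assoc : forall x y z, mul x (mul y z) = mul (mul x y) z;
  grp_mul1l : forall x, mul e x = x;
  grp_mul1r : forall x, mul x e = x;
  grp_mulVl : forall x, mul (inv x) x = e;
  grp_mulVr : forall x, mul x (inv x) = e
}.

Section Sets.
Variable T : Type.

Definition finite_set (X : T -> Prop) : Prop :=
  exists l : list T, forall x, X x <-> In x l.

Definition has_card (X : T -> Prop) (n : nat) : Prop :=
  exists l : list T, NoDup l /\ (forall x, X x <-> In x l) /\ length l = n.

Definition at_least (X : T -> Prop) (k : nat) : Prop :=
  exists l : list T, NoDup l /\ length l = k /\ (forall x, In x l -> X x).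

Definition complement (X : T -> Prop) : T -> Prop := fun x => ~ X x.

End Sets.

Section Cayley.
Variables (T : Type) (mul : T -> T -> T) (inv : T -> T) (e : T).

Inductive generated (S : T -> Prop) : T -> Prop :=
  | gen_in : forall s, S s -> generated S s
  | gen_one : generated S e
  | gen_mul : forall x y, generated S x -> generated S y -> generated S (mul x y)
  | gen_inv : forall x, generated S x -> generated S (inv x).

Definition inv_set (S : T -> Prop) : T -> Prop := fun y => S (inv y).

(* Image Gamma(X) = XS in Cay(G,S) *)
Definition img (S X : T -> Prop) : T -> Prop :=
  fun y => exists x s, X x /\ S s /\ y = mul x s.

Definition bnd (S X : T -> Prop) : T -> Prop :=
  fun y => img S X y /\ ~ X y.

(* X finite, |X| >= k, |V \ Gamma(X)| >= k ; the vertex set V is all of T *)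
Definition admissible (S : T -> Prop) (k : nat) (X : T -> Prop) : Prop :=
  finite_set X /\ at_least X k /\ at_least (complement (img S X)) k.

Definition separable (S : T -> Prop) (k : nat) : Prop :=
  exists X, admissible S k X.

(* k-fragments, including the convention for non-separable graphs *)
Definition fragment (S : T -> Prop) (k : nat) (X : T -> Prop) : Prop :=
  (separable S k /\ admissible S k X /\
     forall Y nX nY, admissible S k Y -> has_card (bnd S X) nX ->
                     has_card (bnd S Y) nY -> nX <= nY)
  \/
  (~ separable S k /\ (exists nV, has_card (fun _ : T => True) nV /\ 2 * k - 1 <= nV)
     /\ has_card X k).

Definition atom (S : T -> Prop) (k : nat) (X : T -> Prop) : Prop :=
  fragment S k X /\
  forall Y nX nY, fragment S k Y -> has_card X nX -> has_card Y nY -> nX <= nY.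

Definition alpha (S : T -> Prop) (k : nat) (a : nat) : Prop :=
  exists X, atom S k X /\ has_card X a.

Definition left_period (X : T -> Prop) : T -> Prop :=
  fun x => forall y, X y <-> exists h, X h /\ y = mul x h.

End Cayley.

(* Main.v *)
Require Import Defs.
From Stdlib Require Import List Arith Lia Classical ClassicalEpsilon.
Import ListNotations.
Set Implicit Arguments.


Definition pdec (P : Prop) : {P} + {~P} := excluded_middle_informative P.
Definition ind {T : Type} (P : T -> Prop) (x : T) : nat := if pdec (P x) then 1 else 0.
Fixpoint cnt {T : Type} (U : list T) (P : T -> Prop) : nat :=
  match U with [] => 0 | x :: U' => ind P x + cnt U' P end.

Lemma ind1 {T} (P : T -> Prop) x : P x -> ind P x = 1.
Proof. unfold ind; destruct (pdec (P x)); tauto. Qed.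
Lemma ind0 {T} (P : T -> Prop) x : ~ P x -> ind P x = 0.
Proof. unfold ind; destruct (pdec (P x)); tauto. Qed.
Lemma ind_le1 {T} (P : T -> Prop) x : ind P x <= 1.
Proof. unfold ind; destruct (pdec (P x)); lia. Qed.

Ltac inds := unfold ind; repeat match goal with |- context [pdec ?P] => destruct (pdec P) end.

Lemma cnt_le2 {T} (U : list T) P1 P2 Q1 Q2 :
  (forall x, In x U -> ind P1 x + ind P2 x <= ind Q1 x + ind Q2 x) ->
  cnt U P1 + cnt U P2 <= cnt U Q1 + cnt U Q2.
Proof. induction U; simpl; intros H; [lia|]. specialize (H a (or_introl eq_refl)) as Ha.
 assert (cnt U P1 + cnt U P2 <= cnt U Q1 + cnt U Q2) by (apply IHU; intros; apply H; auto). lia. Qed.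

Lemma cnt_eq2 {T} (U : list T) P1 P2 Q1 Q2 :
  (forall x, In x U -> ind P1 x + ind P2 x = ind Q1 x + ind Q2 x) ->
  cnt U P1 + cnt U P2 = cnt U Q1 + cnt U Q2.
Proof. induction U; simpl; intros H; [lia|]. specialize (H a (or_introl eq_refl)) as Ha.
 assert (cnt U P1 + cnt U P2 = cnt U Q1 + cnt U Q2) by (apply IHU; intros; apply H; auto). lia. Qed.

Lemma cnt_le {T} (U : list T) (P Q : T -> Prop) :
  (forall x, In x U -> P x -> Q x) -> cnt U P <= cnt U Q.
Proof. induction U; simpl; intros H; [lia|].
 assert (ind P a <= ind Q a) by (inds; auto; exfalso; eauto).
 assert (cnt U P <= cnt U Q) by (apply IHU; intros; apply H; auto). lia. Qed.

Lemma cnt_lt {T} (U : list T) (P Q : T -> Prop) y :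
  (forall x, In x U -> P x -> Q x) -> In y U -> Q y -> ~ P y -> cnt U P < cnt U Q.
Proof. induction U; simpl; intros H Hy Qy Py; [tauto|].
 destruct Hy as [Ea|Hy].
 - subst a. assert (cnt U P <= cnt U Q) by (apply cnt_le; intros; apply H; auto).
   rewrite (ind1 Q y Qy), (ind0 P y Py). lia.
 - assert (ind P a <= ind Q a) by (inds; auto; exfalso; eauto).
   assert (cnt U P < cnt U Q) by (apply IHU; auto). lia. Qed.

Definition fb {T} (P : T -> Prop) (x : T) : bool := if pdec (P x) then true else false.

Lemma cnt_filter {T} (U : list T) P : cnt U P = length (filter (fb P) U).
Proof. induction U; simpl; auto. rewrite IHU. unfold ind, fb. destruct (pdec (P a)); reflexivity. Qed.

Lemma has_card_unique {T} (P : T -> Prop) a b : has_card P a -> has_card P b -> a = b.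
Proof. intros [l1 [N1 [E1 L1]]] [l2 [N2 [E2 L2]]]. subst.
 apply Nat.le_antisymm; apply NoDup_incl_length; auto; intros x Hx.
 apply E2, E1, Hx. apply E1, E2, Hx. Qed.

Lemma card_cnt {T} (U : list T) P : NoDup U -> (forall x, P x -> In x U) -> has_card P (cnt U P).
Proof. intros N Inc. exists (filter (fb P) U). split; [apply NoDup_filter; auto|]. split.
 - intros x; rewrite filter_In; unfold fb; destruct (pdec (P x)); split; intros; auto; try tauto.
   destruct H; discriminate.
 - symmetry; apply cnt_filter. Qed.

Lemma has_card_cnt {T} (U : list T) P n : NoDup U -> (forall x, P x -> In x U) -> has_card P n -> n = cnt U P.
Proof. intros; eapply has_card_unique; eauto using card_cnt. Qed.

Lemma at_least_cnt {T} (U : list T) P k : NoDup U -> (forall x, P x -> In x U) -> at_least P k -> k <= cnt U P.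
Proof. intros N Inc [l [Nl [Ll Il]]]. rewrite cnt_filter, <- Ll. apply NoDup_incl_length; auto.
 intros x Hx; apply filter_In; split; auto. unfold fb; destruct (pdec (P x)); auto. Qed.

Lemma at_least_list {T} (P : T -> Prop) l k : NoDup l -> k <= length l -> (forall x, In x l -> P x) -> at_least P k.
Proof. intros N Hk Hl. exists (firstn k l). split; [|split].
 - apply NoDup_app_remove_r with (skipn k l). rewrite firstn_skipn; auto.
 - apply firstn_length_le; auto.
 - intros x Hx. apply Hl. rewrite <- (firstn_skipn k l). apply in_or_app; auto.
Qed.

Lemma cnt_at_least {T} (U : list T) P k : NoDup U -> k <= cnt U P -> at_least P k.
Proof. intros N Hk. apply at_least_list with (filter (fb P) U).
 apply NoDup_filter; auto. rewrite <- cnt_filter; auto.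
 intros x Hx. apply filter_In in Hx. destruct Hx as [_ Hx]. unfold fb in Hx; destruct (pdec (P x)); auto; discriminate. Qed.

Lemma at_least_mono {T} (P Q : T -> Prop) k : at_least P k -> (forall x, P x -> Q x) -> at_least Q k.
Proof. intros [l [N [L I]]] H; exists l; auto. Qed.

Lemma two_elems {T} (P : T -> Prop) u v : ~ at_least P 2 -> P u -> P v -> u = v.
Proof. intros H Pu Pv. apply NNPP; intro D. apply H. exists [u; v]; simpl; repeat split; auto.
 constructor. simpl; intuition. constructor; auto using NoDup_nil.
 intros x [<-|[<-|[]]]; auto. Qed.

Lemma fin_nodup {T} (P : T -> Prop) (L : list T) : (forall x, P x -> In x L) -> exists U, NoDup U /\ forall x, P x -> In x U.
Proof. intros H. pose (d := fun x y : T => pdec (x = y)).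
 exists (nodup d L). split; [apply NoDup_nodup|]. intros x Px; apply nodup_In; auto. Qed.

Lemma min_nat (P : nat -> Prop) n : P n -> exists m, P m /\ forall k, P k -> m <= k.
Proof. revert P. induction n as [n IH] using lt_wf_ind. intros P Pn.
 destruct (classic (exists k, k < n /\ P k)) as [[k [Hk Pk]]|Hn].
 - eapply IH; eauto.
 - exists n; split; auto. intros k Pk. destruct (Nat.lt_ge_cases k n); auto. exfalso; eauto. Qed.

Lemma nodup_map_inj {A B} (f : A -> B) l : NoDup l -> (forall x y, In x l -> In y l -> f x = f y -> x = y) -> NoDup (map f l).
Proof. induction l; simpl; intros N H; constructor; inversion N; subst.
 - intros Hin. apply in_map_iff in Hin as [y [Hy Iy]]. assert (y = a) by (apply H; auto). subst; tauto.
 - apply IHl; auto. Qed.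

Lemma lcancel T mul inv (e:T) (HG : is_group mul inv e) x a b : mul x a = mul x b -> a = b.
Proof. intros E. rewrite <- (grp_mul1l HG a), <- (grp_mul1l HG b), <- (grp_mulVl HG x),
  <- !(grp_assoc HG), E; auto. Qed.

Lemma inv_inv T mul inv (e:T) (HG : is_group mul inv e) x : inv (inv x) = x.
Proof. apply (lcancel HG (inv x)). rewrite (grp_mulVr HG), (grp_mulVl HG); auto. Qed.

Lemma img_cover T (mul : T -> T -> T) (S X : T -> Prop) lX lS :
  (forall x, X x -> In x lX) -> (forall s, S s -> In s lS) ->
  forall y, img mul S X y -> In y (flat_map (fun x => map (mul x) lS) lX).
Proof. intros HX HS y [x [s [Xx [Ss ->]]]]. apply in_flat_map. exists x; split; auto.
 apply in_map; auto. Qed.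

Lemma img_fin T (mul : T -> T -> T) (S X : T -> Prop) m :
  has_card S m -> finite_set X -> exists U, NoDup U /\ (forall y, img mul S X y -> In y U) /\ (forall y, X y -> In y U).
Proof. intros [lS [_ [ES _]]] [lX EX].
 destruct (@fin_nodup _ (fun y => img mul S X y \/ X y) (flat_map (fun x => map (mul x) lS) lX ++ lX)) as [U [NU HU]].
 - intros y [Hy|Hy]; apply in_or_app; [left|right]. eapply img_cover; eauto; intros; [apply EX|apply ES]; auto. apply EX; auto.
 - exists U; split; auto.
Qed.

Lemma map_card T mul inv (e:T) (HG : is_group mul inv e) (P Q : T -> Prop) n x :
  has_card P n -> (forall y, Q y <-> exists z, P z /\ y = mul x z) -> has_card Q n.
Proof. intros [l [N [E L]]] HQ. exists (map (mul x) l). split; [|split].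
 - apply nodup_map_inj; auto. intros a b _ _; apply (lcancel HG).
 - intros y; rewrite HQ, in_map_iff. split; intros [z [A B]]; exists z; split; auto; try apply E; auto.
 - rewrite length_map; auto. Qed.

Lemma map_at_least T mul inv (e:T) (HG : is_group mul inv e) (P Q : T -> Prop) n x :
  at_least P n -> (forall z, P z -> Q (mul x z)) -> at_least Q n.
Proof. intros [l [N [L E]]] HQ. exists (map (mul x) l). split; [|split].
 - apply nodup_map_inj; auto. intros a b _ _; apply (lcancel HG).
 - rewrite length_map; auto.
 - intros y Hy; apply in_map_iff in Hy as [z [<- Hz]]; auto. Qed.

Lemma translate T mul inv (e:T) (HG : is_group mul inv e) (S H : T -> Prop) n k x :
  admissible mul S 2 H -> has_card H n -> has_card (bnd mul S H) k ->
  admissible mul S 2 (fun y => exists h, H h /\ y = mul x h) /\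
  has_card (fun y => exists h, H h /\ y = mul x h) n /\
  has_card (bnd mul S (fun y => exists h, H h /\ y = mul x h)) k.
Proof. intros [_ [A1 A2]] Hn Hk.
 set (Y := fun y => exists h, H h /\ y = mul x h).
 assert (IY : forall y, img mul S Y y <-> exists z, img mul S H z /\ y = mul x z).
 { intros y; split.
   - intros [w [s [[h [Hh ->]] [Ss ->]]]]. exists (mul h s); split. exists h, s; auto. rewrite (grp_assoc HG); auto.
   - intros [z [[h [s [Hh [Ss ->]]]] ->]]. exists (mul x h), s. split; [exists h; auto|]. split; auto. rewrite (grp_assoc HG); auto. }
 assert (CY : has_card Y n) by (apply (map_card HG) with (P := H) (x := x); auto; intros; reflexivity).
 split; [|split; auto].
 - split; [|split].
   + destruct CY as [l [_ [E _]]]; exists l; auto.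
   + apply (map_at_least HG) with (P := H) (x := x); auto. intros z Hz; exists z; auto.
   + apply (map_at_least HG) with (P := complement (img mul S H)) (x := x); auto. intros z Hz HY. apply IY in HY as [w [Iw E]].
     apply (lcancel HG) in E; subst; auto.
 - apply (map_card HG) with (P := bnd mul S H) (x := x); auto. intros y; split.
   + intros [Iy Ny]. apply IY in Iy as [z [Iz ->]]. exists z; split; auto. split; auto.
     intros Hz; apply Ny; exists z; auto.
   + intros [z [[Iz Nz] ->]]. split. apply IY; eauto. intros [h [Hh E]].
     apply (lcancel HG) in E; subst; auto.
Qed.

Lemma fin_all T (UG : list T) (P : T -> Prop) : (forall x, In x UG) -> finite_set P.
Proof. intros A. exists (filter (fb P) UG). intros x; rewrite filter_In; unfold fb.
 destruct (pdec (P x)); split; intros; auto; try tauto. destruct H; discriminate. Qed.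

Lemma dual_frag T mul inv (e:T) (HG : is_group mul inv e) (S X : T -> Prop) k (UG : list T) :
  NoDup UG -> (forall x, In x UG) ->
  admissible mul S 2 X -> has_card (bnd mul S X) k ->
  (forall Z nZ, admissible mul S 2 Z -> has_card (bnd mul S Z) nZ -> k <= nZ) ->
  fragment mul (inv_set inv S) 2 (complement (img mul S X)).
Proof. intros NG AG [_ [A1 A2]] Hk Hmin.
 assert (FA : forall Y : T -> Prop, finite_set Y) by (intros; eapply fin_all; eauto).
 assert (SUB : forall P : T -> Prop, forall x, P x -> In x UG) by auto.
 assert (A : forall y, img mul (inv_set inv S) (complement (img mul S X)) y -> ~ X y).
 { intros y [w [s [Nw [Ss ->]]]] Xy. apply Nw. exists (mul w s), (inv s). split; auto. split.
   unfold inv_set in Ss; auto. rewrite <- (grp_assoc HG), (grp_mulVr HG), (grp_mul1r HG); auto. }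
 assert (ADM : admissible mul (inv_set inv S) 2 (complement (img mul S X))).
 { split; auto. split; auto. apply (@at_least_mono _ X); auto. intros x Xx Hc. eapply A; eauto. }
 left. split; [exists (complement (img mul S X)); auto|]. split; auto.
 intros Y nX nY [_ [B1 B2]] HnX HnY.
 rewrite (has_card_cnt NG (SUB _) HnX), (has_card_cnt NG (SUB _) HnY).
 assert (L1 : cnt UG (bnd mul (inv_set inv S) (complement (img mul S X))) <= cnt UG (bnd mul S X)).
 { apply cnt_le. intros y _ [Iy Ny]. split. apply NNPP; auto. eapply A; eauto. }
 assert (A' : forall y, img mul S (complement (img mul (inv_set inv S) Y)) y -> ~ Y y).
 { intros y [w [s [Nw [Ss ->]]]] Yy. apply Nw. exists (mul w s), (inv s). split; auto. split.
   unfold inv_set; rewrite (inv_inv HG); auto. rewrite <- (grp_assoc HG), (grp_mulVr HG), (grp_mul1r HG); auto. }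
 assert (L2 : k <= cnt UG (bnd mul S (complement (img mul (inv_set inv S) Y)))).
 { apply (Hmin (complement (img mul (inv_set inv S) Y))). split; auto. split; auto. apply (@at_least_mono _ Y); auto. intros x Xx Hc. eapply A'; eauto.
   apply card_cnt; auto. }
 assert (L3 : cnt UG (bnd mul S (complement (img mul (inv_set inv S) Y))) <= cnt UG (bnd mul (inv_set inv S) Y)).
 { apply cnt_le. intros y _ [Iy Ny]. split. apply NNPP; auto. eapply A'; eauto. }
 pose proof (has_card_cnt NG (SUB _) Hk). lia.
Qed.

Lemma fin_sub T (U : list T) (P : T -> Prop) : (forall x, P x -> In x U) -> finite_set P.
Proof. intros A. exists (filter (fb P) U). intros x; rewrite filter_In; unfold fb.
 destruct (pdec (P x)); split; intros; auto; try tauto. destruct H; discriminate. Qed.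

Lemma atom_exists T mul (S' A0 : T -> Prop) c0 :
  fragment mul S' 2 A0 -> has_card A0 c0 -> exists b, b <= c0 /\ alpha mul S' 2 b.
Proof. intros F C.
 destruct (@min_nat (fun c => exists Z, fragment mul S' 2 Z /\ has_card Z c) c0) as [b [[A [FA CA]] Mb]].
 { exists A0; auto. }
 exists b; split. apply Mb; eauto. exists A; split; auto. split; auto.
 intros Y nX nY FY CX CY. rewrite (has_card_unique CX CA). apply Mb; eauto. Qed.

Lemma two_list T (P : T -> Prop) a b : a <> b -> P a -> P b -> at_least P 2.
Proof. intros D Pa Pb. exists [a; b]. split; [|split; auto].
 constructor; [simpl; intuition|constructor; auto using NoDup_nil].
 intros z [<-|[<-|[]]]; auto. Qed.



Lemma inter T mul inv (e:T) (HG : is_group mul inv e) (S H : T -> Prop) m n k x a b :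
  has_card S m -> S e ->
  (~ finite_set (fun _ : T => True) \/
     (forall a b, alpha mul S 2 a -> alpha mul (inv_set inv S) 2 b -> a <= b)) ->
  admissible mul S 2 H -> has_card H n -> has_card (bnd mul S H) k ->
  (forall Z nZ, admissible mul S 2 Z -> has_card (bnd mul S Z) nZ -> k <= nZ) ->
  atom mul S 2 H ->
  a <> b -> H a -> H b ->
  (exists h, H h /\ a = mul x h) -> (exists h, H h /\ b = mul x h) ->
  forall y, H y <-> exists h, H h /\ y = mul x h.
Proof. intros CS Se Hcase AH CH CK Hmin HA Dab Ha Hb Ya Yb.
 set (Y := fun y => exists h, H h /\ y = mul x h) in *.
 destruct (translate HG x AH CH CK) as [AY [CY KY]]. fold Y in AY, CY, KY.
 set (I := fun y => H y /\ Y y). set (J := fun y => H y \/ Y y).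
 assert (FJ : finite_set J).
 { destruct CH as [l1 [_ [E1 _]]]; destruct CY as [l2 [_ [E2 _]]]. exists (l1 ++ l2).
   intros y; rewrite in_app_iff, <- E1, <- E2; unfold J; tauto. }
 destruct (@img_fin T mul S J m CS FJ) as [U [NU [UI UJ]]].
 assert (UH : forall y, H y -> In y U) by (intros; apply UJ; left; auto).
 assert (UY : forall y, Y y -> In y U) by (intros; apply UJ; right; auto).
 assert (imgH : forall z, img mul S H z -> img mul S J z) by (intros z [u [s [Hu [Ss ->]]]]; exists u, s; unfold J; auto).
 assert (imgY : forall z, img mul S Y z -> img mul S J z) by (intros z [u [s [Hu [Ss ->]]]]; exists u, s; unfold J; auto).
 assert (UIH : forall y, img mul S H y -> In y U) by auto.
 assert (UIY : forall y, img mul S Y y -> In y U) by auto.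
 assert (nH : cnt U H = n) by (symmetry; apply has_card_cnt; auto).
 assert (nY : cnt U Y = n) by (symmetry; apply has_card_cnt; auto).
 assert (kH : cnt U (bnd mul S H) = k) by (symmetry; apply has_card_cnt; auto; intros y [Hy _]; auto).
 assert (kY : cnt U (bnd mul S Y) = k) by (symmetry; apply has_card_cnt; auto; intros y [Hy _]; auto).
 assert (imgI : forall z, img mul S I z -> img mul S H z /\ img mul S Y z)
   by (intros z [u [s [[Hu Yu] [Ss ->]]]]; split; exists u, s; auto).
 assert (imgJ : forall z, img mul S J z -> img mul S H z \/ img mul S Y z)
   by (intros z [u [s [[Hu|Yu] [Ss ->]]]]; [left|right]; exists u, s; auto).
 assert (AI : admissible mul S 2 I).
 { split; [apply (fin_sub U); intros y [Hy _]; auto|]. split.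
   - apply two_list with a b; auto; split; auto.

   - destruct AH as [_ [_ A2]]. apply (@at_least_mono _ (complement (img mul S H))); auto.
     intros z Cz Iz; apply Cz, imgI, Iz. }
 assert (kI : k <= cnt U (bnd mul S I)).
 { apply (Hmin I); [exact AI|]. apply card_cnt; [exact NU|]. intros y [Iy _]; apply UI, imgH, (proj1 (imgI y Iy)). }
 assert (kJ : k <= cnt U (bnd mul S J)).
 { destruct (classic (at_least (complement (img mul S J)) 2)) as [AJ|NAJ].
   - apply (Hmin J). split; auto. split; auto. apply two_list with a b; unfold J; auto.
     apply card_cnt; auto. intros y [Iy _]; auto.
   -
     assert (FG : exists UG : list T, NoDup UG /\ forall z, In z UG).
     { destruct (classic (exists c, complement (img mul S J) c)) as [[c Cc]|NC].
       - destruct (@fin_nodup _ (fun _ => True) (c :: U)) as [UG [NG HG']].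
         { intros z _. destruct (classic (img mul S J z)) as [Iz|Iz]; [right; auto|left].
           apply (two_elems c z NAJ Cc Iz). }
         exists UG; auto.
       - exists U; split; auto. intros z. apply UI. apply NNPP; intro Iz; apply NC; exists z; auto. }
     destruct FG as [UG [NG AG]].
     destruct Hcase as [Inf|Halpha].
     { exfalso; apply Inf. exists UG; split; auto. }
     assert (SG : forall P : T -> Prop, forall z, P z -> In z UG) by auto.
     assert (FD := dual_frag HG NG AG AH CK Hmin).
     destruct (atom_exists FD (card_cnt _ NG (SG _))) as [b0 [Lb0 Ab0]].
     assert (nb : n <= b0) by (apply Halpha; auto; exists H; auto).
     assert (E1 : cnt UG (img mul S J) + cnt UG (complement (img mul S J)) = cnt UG (fun _ => True) + cnt UG (fun _ => False)).
     { apply cnt_eq2; intros z _; inds; unfold complement in *; try lia; exfalso; tauto. }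
     assert (E2 : cnt UG (complement (img mul S J)) <= 1).
     { destruct (Nat.le_gt_cases (cnt UG (complement (img mul S J))) 1) as [|G2]; auto.
       exfalso; apply NAJ; apply (cnt_at_least _ NG); lia. }
     assert (Jimg : forall z, J z -> img mul S J z) by (intros z Jz; exists z, e; rewrite (grp_mul1r HG); auto).
     assert (Himg : forall z, H z -> img mul S H z) by (intros z Jz; exists z, e; rewrite (grp_mul1r HG); auto).
     assert (E3 : cnt UG (bnd mul S J) + cnt UG J = cnt UG (img mul S J) + cnt UG (fun _ => False)).
     { apply cnt_eq2; intros z _; specialize (Jimg z); unfold bnd; inds; unfold complement in *; try lia; exfalso; tauto. }
     assert (E4 : cnt UG J + cnt UG I = cnt UG H + cnt UG Y).
     { apply cnt_eq2; intros z _; unfold I, J; inds; unfold complement in *; try lia; exfalso; tauto. }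
     assert (E5 : cnt UG (bnd mul S H) + cnt UG H = cnt UG (img mul S H) + cnt UG (fun _ => False)).
     { apply cnt_eq2; intros z _; specialize (Himg z); unfold bnd; inds; unfold complement in *; try lia; exfalso; tauto. }
     assert (E6 : cnt UG (img mul S H) + cnt UG (complement (img mul S H)) = cnt UG (fun _ => True) + cnt UG (fun _ => False)).
     { apply cnt_eq2; intros z _; unfold complement; inds; unfold complement in *; try lia; exfalso; tauto. }
     assert (E0 : cnt UG (fun _ => False) = 0).
     { clear. induction UG; simpl; auto. rewrite ind0; auto. }
     assert (E7 : 2 <= cnt UG I) by (apply at_least_cnt; auto; destruct AI as [_ [AI _]]; auto).
     assert (E8 : cnt UG H = n) by (symmetry; apply has_card_cnt; auto).
     assert (E9 : cnt UG Y = n) by (symmetry; apply has_card_cnt; auto).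
     assert (E10 : cnt UG (bnd mul S H) = k) by (symmetry; apply has_card_cnt; auto).
     assert (E11 : cnt U (bnd mul S J) = cnt UG (bnd mul S J)).
     { apply has_card_cnt; auto. apply card_cnt; auto. intros y [Iy _]; auto. }
     lia. }
 assert (SM : cnt U (bnd mul S I) + cnt U (bnd mul S J) <= cnt U (bnd mul S H) + cnt U (bnd mul S Y)).
 { apply cnt_le2; intros z _. specialize (imgI z); specialize (imgJ z). unfold bnd, I, J; inds; try lia; exfalso; tauto. }
 assert (FI : fragment mul S 2 I).
 { left. split; [exists H; auto|]. split; auto.
   intros Z nX nZ AZ CX CZ. assert (nX = cnt U (bnd mul S I)).
   { apply has_card_cnt; auto. intros y [Iy _]; apply UI, imgH, (proj1 (imgI y Iy)). }
   assert (k <= nZ) by (eapply Hmin; eauto). lia. }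
 destruct HA as [_ HA].
 assert (nI : n <= cnt U I).
 { apply (HA I); auto. apply card_cnt; auto. intros y [Hy _]; auto. }
 intros y; split; intros Hy; apply NNPP; intro Ny.
 - assert (cnt U I < cnt U H). { apply cnt_lt with y; auto. intros z _ [Hz _]; auto. intros [_ Yy]; auto. } lia.
 - assert (cnt U I < cnt U Y). { apply cnt_lt with y; auto. intros z _ [_ Hz]; auto. intros [Hy' _]; auto. } lia.
Qed.
Unset Implicit Arguments.

Lemma rdiv {T} {mul} {inv} {e:T} (HG : is_group mul inv e) h h' s : h = mul h' s -> h' = mul h (inv s).
Proof. intros ->. rewrite <- (grp_assoc HG), (grp_mulVr HG), (grp_mul1r HG); auto. Qed.

Theorem mainTheorem12 (T : Type) (mul : T -> T -> T) (inv : T -> T) (e : T)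
  (HG : is_group mul inv e)
  (S : T -> Prop) (m : nat)
  (HSgen : forall x, generated mul inv e S x)
  (HS1 : S e) (HScard : has_card S m) (HS3 : 3 <= m)
  (Hcase : ~ finite_set (fun _ : T => True) \/
           (forall a b, alpha mul S 2 a -> alpha mul (inv_set inv S) 2 b -> a <= b))
  (H : T -> Prop) (HH : atom mul S 2 H) (HH1 : H e)
  (HPi : has_card (left_period mul H) 1) :
  forall n, has_card H n -> n <= m - 1.
Proof.
 intros n Cn. pose proof HH as [HF HAm].
 destruct HF as [[Sep [AH Hmin0]]|[_ [_ C2]]].
 2:{ rewrite (has_card_unique Cn C2); lia. }
 destruct (Nat.le_gt_cases n 2) as [|n3]; [lia|].
 assert (FH : finite_set H) by (destruct Cn as [l [_ [E _]]]; exists l; auto).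
 destruct (@img_fin T mul S H m HScard FH) as [U [NU [UI UH]]].
 set (k := cnt U (bnd mul S H)).
 assert (Ck : has_card (bnd mul S H) k) by (apply card_cnt; auto; intros y [Iy _]; auto).
 assert (Hmin : forall Z nZ, admissible mul S 2 Z -> has_card (bnd mul S Z) nZ -> k <= nZ)
   by (intros; eapply Hmin0; eauto).
 assert (nH : cnt U H = n) by (symmetry; apply has_card_cnt; auto).
 assert (Step1 : forall h, H h -> exists h' s, H h' /\ h' <> h /\ S s /\ h = mul h' s).
 { intros h Hh. apply NNPP; intro NE.
   set (Y := fun y => H y /\ y <> h).
   assert (c1 : cnt U (fun z => z = h) = 1).
   { symmetry; apply has_card_cnt; auto. intros z ->; auto. exists [h]; simpl; split.
     constructor; auto using NoDup_nil. split; auto. intros z; split; intuition. }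
   assert (c2 : cnt U H + cnt U (fun _ => False) <= cnt U Y + cnt U (fun z => z = h)).
   { apply cnt_le2; intros z _; unfold Y; inds; try lia; exfalso; tauto. }
   assert (E0 : cnt U (fun _ : T => False) = 0).
   { clear. induction U; simpl; auto. rewrite ind0; auto. }
   assert (c3 : cnt U Y < cnt U H).
   { apply (@cnt_lt _ U Y H h); auto. intros z _ [Hz _]; auto. unfold Y; tauto. }
   assert (imgY : forall z, img mul S Y z -> img mul S H z)
     by (intros z [u [s [[Hu _] [Ss ->]]]]; exists u, s; auto).
   assert (AY : admissible mul S 2 Y).
   { split; [apply (fin_sub U); intros y [Hy _]; auto|]. split.
     - apply (cnt_at_least _ NU); lia.
     - destruct AH as [_ [_ A2]]. apply (@at_least_mono _ (complement (img mul S H))); auto.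
       intros z Cz Iz; apply Cz, imgY, Iz. }
   assert (bY : cnt U (bnd mul S Y) <= k).
   { apply cnt_le. intros y _ [Iy Ny]. split; auto. intros Hy.
     assert (y = h) by (apply NNPP; intro; apply Ny; split; auto). subst y.
     destruct Iy as [u [s [[Hu Du] [Ss Eq]]]]. apply NE; exists u, s; auto. }
   assert (FY : fragment mul S 2 Y).
   { left. split; auto. split; auto. intros Z nX nZ AZ CX CZ.
     assert (nX = cnt U (bnd mul S Y)) by (apply has_card_cnt; auto; intros y [Iy _]; apply UI, imgY, Iy).
     assert (k <= nZ) by (eapply Hmin; eauto). lia. }
   assert (n <= cnt U Y).
   { apply (HAm Y); auto. apply card_cnt; auto. intros y [Hy _]; auto. }
   lia. }
 assert (Step2 : forall h1 h2 h1' h2' s, H h1 -> H h2 -> H h1' -> H h2' -> h1' <> h1 ->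
           h1 = mul h1' s -> h2 = mul h2' s -> h1 = h2).
 { intros h1 h2 h1' h2' s H1 H2 H1' H2' D E1 E2.
   set (x := mul h1 (inv h2)).
   assert (Px : left_period mul H x).
   { intros y. eapply (@inter T mul inv e HG S H m n k x h1 h1'); eauto.
     - exists h2; split; auto. unfold x. rewrite <- (grp_assoc HG), (grp_mulVl HG), (grp_mul1r HG); auto.
     - exists h2'; split; auto. unfold x. rewrite (rdiv HG _ _ _ E2), (rdiv HG _ _ _ E1).
       rewrite <- (grp_assoc HG), (grp_assoc HG (inv h2)), (grp_mulVl HG), (grp_mul1l HG); auto. }
   assert (Pe : left_period mul H e).
   { intros y; split; intros Hy. exists y; rewrite (grp_mul1l HG); auto.
     destruct Hy as [h [Hh ->]]; rewrite (grp_mul1l HG); auto. }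
   destruct HPi as [l [_ [El Ll]]].
   destruct l as [|z [|z' l]]; simpl in Ll; try lia.
   apply El in Px; apply El in Pe. destruct Px as [Px|[]]; destruct Pe as [Pe|[]].
   assert (x = e) by congruence.
   unfold x in H0. rewrite <- (grp_mul1l HG h2), <- H0, <- (grp_assoc HG), (grp_mulVl HG), (grp_mul1r HG); auto. }
 set (phi := fun h => epsilon (inhabits e) (fun s => exists h', H h' /\ h' <> h /\ S s /\ h = mul h' s)).
 assert (Sphi : forall h, H h -> exists h', H h' /\ h' <> h /\ S (phi h) /\ h = mul h' (phi h)).
 { intros h Hh. apply (epsilon_spec (inhabits e) (fun s => exists h', H h' /\ h' <> h /\ S s /\ h = mul h' s)).
   destruct (Step1 h Hh) as [h' [s P]]; exists s, h'; auto. }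
 destruct Cn as [lH [NH [EH LH]]]. destruct HScard as [lS [NS [ES LS]]].
 assert (ND : NoDup (e :: map phi lH)).
 { constructor.
   - intros Hin. apply in_map_iff in Hin as [h [Eh Ih]]. apply EH in Ih.
     destruct (Sphi h Ih) as [h' [_ [D [_ Eq]]]]. rewrite Eh, (grp_mul1r HG) in Eq. auto.
   - apply nodup_map_inj; auto. intros h1 h2 I1 I2 Eq. apply EH in I1; apply EH in I2.
     destruct (Sphi h1 I1) as [h1' [P1 [D1 [_ E1]]]]. destruct (Sphi h2 I2) as [h2' [P2 [D2 [_ E2]]]].
     rewrite Eq in E1. apply (Step2 h1 h2 h1' h2' (phi h2)); auto. }
 assert (length (e :: map phi lH) <= length lS).
 { apply NoDup_incl_length; auto. intros z [<-|Hz]; apply ES; auto.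
   apply in_map_iff in Hz as [h [<- Ih]]. apply EH in Ih. destruct (Sphi h Ih) as [? [_ [_ [? _]]]]; auto. }
 simpl in H0; rewrite length_map in H0. lia.
Qed.
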